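(* Let $H_5$ be the tournament with vertex set $\{1,2,3,4,5\}$ whose edges are $1\to4$ and $2\to5$, and $j\to i$ for every other pair $i<j$ (i.e., $2\to1$, $3\to1$, $5\to1$, $3\to2$, $4\to2$, $4\to3$, $5\to3$, $5\to4$). Then $H_5$ is not quasirandom-forcing.
   Context: A tournament is an orientation of a complete graph; $\mathrm{Aut}(H)$ is its automorphism group. For tournaments $H,G$, $d(H,G)$ is the probability that $\lvert H\rvert$ uniformly random distinct vertices of $G$ induce a tournament isomorphic to $H$ (and $0$ if $\lvert H\rvert>\lvert G\rvert$). A sequence $(G_n)$ of tournaments with $\lvert G_n\rvert\to\infty$ is quasirandom if $\lim_{n\to\infty} d(F,G_n)=\frac{m!}{\lvert\mathrm{Aut}(F)\rvert}2^{-\binom{m}{2}}$ for every tournament $F$ with $m$ vertices. A $k$-vertex tournament $H$ is quasirandom-forcing if every sequence $(G_n)$ of tournaments with $\lvert G_n\rvert\to\infty$ and $\lim_{n\to\infty} d(H,G_n)=\frac{k!}{\lvert\mathrm{Aut}(H)\rvert}2^{-\binom{k}{2}}$ is quasirandom. *)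

(* Defs.v *)
From HB Require Import structures.
From mathcomp Require Import all_boot all_order all_algebra all_fingroup.
From mathcomp Require Import all_classical all_reals all_analysis.
Set Implicit Arguments. Unset Strict Implicit. Unset Printing Implicit Defensive.
Import Order.TTheory GRing.Theory Num.Theory numFieldNormedType.Exports.
Local Open Scope classical_set_scope.
Local Open Scope ring_scope.

Definition is_tournament (n : nat) (E : rel 'I_n) : Prop :=
  (forall i, ~~ E i i) /\ (forall i j, i != j -> E i j = ~~ E j i).

Definition Aut (m : nat) (F : rel 'I_m) : {set {perm 'I_m}} :=
  [set s : {perm 'I_m} | [forall i, forall j, F (s i) (s j) == F i j]].

Definition induces_copy (k n : nat) (H : rel 'I_k) (G : rel 'I_n)
    (S : {set 'I_n}) : bool :=
  [exists f : {ffun 'I_k -> 'I_n},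
     injectiveb f && (f @: [set: 'I_k] == S) &&
     [forall i, forall j, H i j == G (f i) (f j)]].

(* d(H,G): probability that |H| uniformly random distinct vertices of G
   (i.e. a uniformly random |H|-subset) induce a copy of H; 0 if |H| > |G|. *)
Definition dens (R : realType) (k n : nat) (H : rel 'I_k) (G : rel 'I_n) : R :=
  if (n < k)%N then 0
  else (#|[set S : {set 'I_n} | (#|S| == k) && induces_copy H G S]|)%:R
       / ('C(n, k))%:R.

Definition rand_dens (R : realType) (m : nat) (F : rel 'I_m) : R :=
  (m`!)%:R / (#|Aut F|)%:R * (2%:R ^- 'C(m, 2)).

Definition tseq := nat -> {n : nat & rel 'I_n}.

Definition is_tseq (G : tseq) : Prop :=
  (forall n, is_tournament (projT2 (G n))) /\
  (forall M : nat, exists N : nat, forall n, (N <= n)%N -> (M <= projT1 (G n))%N).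

Definition quasirandom (R : realType) (G : tseq) : Prop :=
  forall (m : nat) (F : rel 'I_m), is_tournament F ->
    (fun n => dens R F (projT2 (G n))) @ \oo --> rand_dens R F.

Definition qr_forcing (R : realType) (k : nat) (H : rel 'I_k) : Prop :=
  forall G : tseq, is_tseq G ->
    (fun n => dens R H (projT2 (G n))) @ \oo --> rand_dens R H ->
    quasirandom R G.

(* H_5 on vertices 0..4 standing for 1..5: edges 1->4, 2->5, and j->i for
   every other pair i<j. *)
Definition H5 : rel 'I_5 := fun i j =>
  let a := (val i).+1 in let b := (val j).+1 in
  if ((a == 1) && (b == 4)) || ((a == 2) && (b == 5)) then true
  else if ((a == 4) && (b == 1)) || ((a == 5) && (b == 2)) then false
  else (b < a)%N.

(* Main.v *)
Require Import Defs.
From mathcomp Require Import all_boot all_order all_algebra all_fingroup.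
From mathcomp Require Import all_classical all_reals all_analysis.
From mathcomp Require Import zify ring lra.
Set Implicit Arguments. Unset Strict Implicit. Unset Printing Implicit Defensive.
Import Order.TTheory GRing.Theory Num.Theory numFieldNormedType.Exports.

Definition qr (p q : nat) : bool := ((q + 7 - p) %% 7) \in [:: 1; 2; 4]%N.
Definition base (i : nat) : nat := nth 0%N [:: 0; 3; 6; 2; 5]%N i.
Definition mlt (k : nat) : nat := nth 0%N [:: 1; 2; 4]%N k.
Definition phi (q i : nat) : nat := (mlt (q %/ 7) * base i + q %% 7) %% 7.
Definition h5 (a b : nat) : bool :=
  let a := a.+1 in let b := b.+1 in
  if ((a == 1) && (b == 4)) || ((a == 2) && (b == 5)) then true
  else if ((a == 4) && (b == 1)) || ((a == 5) && (b == 2)) then false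
  else (b < a)%N.

Lemma H5E (i j : 'I_5) : H5 i j = h5 i j. Proof. by []. Qed.

Lemma check_qr : all (fun p => all (fun q => (p == q) || (qr p q == ~~ qr q p)) (iota 0 7)) (iota 0 7).
Proof. by []. Qed.
Lemma check_phi : all (fun q => all (fun i => all (fun j =>
   (h5 i j == qr (phi q i) (phi q j)) && ((phi q i == phi q j) == (i == j))) (iota 0 5)) (iota 0 5)) (iota 0 21).
Proof. by []. Qed.
Lemma check_inj : all (fun q => all (fun q' =>
   all (fun i => has (fun j => phi q i == phi q' j) (iota 0 5)) (iota 0 5) ==> (q == q')) (iota 0 21)) (iota 0 21).
Proof. by []. Qed.
Lemma check_h5 : all (fun i => all (fun j => (~~ h5 i i) && ((i == j) || (h5 i j == ~~ h5 j i))) (iota 0 5)) (iota 0 5).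
Proof. by []. Qed.

Lemma check_all (P : nat -> bool) n : all P (iota 0 n) -> forall i, (i < n)%N -> P i.
Proof. by move=> /allP h i hi; apply: h; rewrite mem_iota. Qed.

Local Open Scope ring_scope.
Definition cnt k n (H : rel 'I_k) (G : rel 'I_n) : nat :=
  #|[set S : {set 'I_n} | (#|S| == k) && induces_copy H G S]|.

Lemma dens_cnt (R : realType) k n (H : rel 'I_k) (G : rel 'I_n) : (k <= n)%N ->
  dens R H G = (cnt H G)%:R / ('C(n, k))%:R.
Proof.
move=> h; rewrite /dens ltnNge h /=; congr (_%:R / _).
by apply: eq_card => S; rewrite /= !inE; apply/idP/idP; rewrite in_setE.
Qed.

Lemma induces_copy_ext k n (H : rel 'I_k) (G G' : rel 'I_n) (S : {set 'I_n}) :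
  (forall x y, x \in S -> y \in S -> G x y = G' x y) ->
  induces_copy H G S = induces_copy H G' S.
Proof.
move=> hGG'.
suff gen : forall G1 G2 : rel 'I_n, (forall x y, x \in S -> y \in S -> G1 x y = G2 x y) ->
   induces_copy H G1 S -> induces_copy H G2 S.
  by apply/idP/idP; apply: gen => // x y xS yS; rewrite hGG'.
move=> G1 G2 h12 /existsP[f /andP[/andP[hi /eqP hS] /forallP hf]]; apply/existsP; exists f.
rewrite hi hS eqxx /=; apply/forallP => i; apply/forallP => j.
have mem : forall i, f i \in S by move=> l; rewrite -hS; apply: imset_f; rewrite inE.
by rewrite -h12 ?mem // (forallP (hf i) j).
Qed.

Lemma cnt_flip n (H : rel 'I_5) (G G' : rel 'I_n) :
  (forall x, G x x = G' x x) ->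
  (forall x y x' y', G x y != G' x y -> G x' y' != G' x' y' ->
     ((x == x') && (y == y')) || ((x == y') && (y == x'))) ->
  (cnt H G <= cnt H G' + 'C(n, 3))%N.
Proof.
move=> hd hu.
case: (pickP (fun p : 'I_n * 'I_n => G p.1 p.2 != G' p.1 p.2)) => [[a b] /= hab|hno]; last first.
  rewrite /cnt (_ : [set S : {set 'I_n} | _ & induces_copy H G S] = [set S : {set 'I_n} | (#|S| == 5) && induces_copy H G' S]) ?leq_addr //.
  apply/setP => S; rewrite !inE (@induces_copy_ext _ _ _ G G') // => x y _ _.
  by have := hno (x, y) => /= /negbFE/eqP.
have hab' : a != b by apply: contraNneq hab => ->; rewrite hd.
set P := [set S : {set 'I_n} | (#|S| == 5) && (a \in S) && (b \in S)].
have sub : [set S : {set 'I_n} | (#|S| == 5) && induces_copy H G S] \subset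
           [set S : {set 'I_n} | (#|S| == 5) && induces_copy H G' S] :|: P.
  apply/fintype.subsetP => S; rewrite !inE => /andP[c5 hc]; rewrite c5 /=.
  case: (boolP ((a \in S) && (b \in S))) => [hab2 | hn]; first by rewrite orbT.
  rewrite orbF -(@induces_copy_ext _ _ _ G) ?hc // => x y xS yS.
  case: (boolP (G x y != G' x y)) => [hxy|/negPn/eqP //].
  by case/orP: (hu _ _ _ _ hxy hab) => /andP[/eqP ex /eqP ey]; move: hn; rewrite -ex -ey ?xS ?yS.
apply: (leq_trans (subset_leq_card sub)); apply: (leq_trans (leq_card_setU _ _)).
rewrite leq_add2l.
have -> : 'C(n, 3) = #|[set A : {set 'I_n} | #|A| == 3]| by rewrite card_draws card_ord.
rewrite -(@card_in_imset _ _ (fun S => S :\: [set a; b]) P); last first.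
  move=> S T; rewrite !inE => /andP[/andP[_ aS] bS] /andP[/andP[_ aT] bT] e.
  apply/setP => x; move/setP: e => /(_ x); rewrite !inE.
  case: (x =P a) => [xa|_]; first by rewrite xa aS aT. case: (x =P b) => [xb|_] //=; by rewrite xb bS bT.
apply: subset_leq_card; apply/fintype.subsetP => Y /imsetP[S]; rewrite inE => /andP[/andP[c5 aS] bS] ->.
rewrite inE cardsD (finset.setIidPr _) ?cards2 ?hab' ?(eqP c5) //.
by apply/fintype.subsetP => x; rewrite !inE => /orP[]/eqP->.
Qed.

Lemma ivt_disc (R : realType) (a : nat -> R) (X D : R) M :
  0 <= D -> X <= a 0%N -> a M <= X -> (forall t, (t < M)%N -> `|a t.+1 - a t| <= D) ->
  exists t, `|a t - X| <= D.
Proof.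
move=> D0; elim: M => [|M IH] h0 hM hs.
  exists 0%N; have -> : a 0%N = X by apply/le_anti; rewrite h0 hM.
  by rewrite subrr normr0.
case: (leP (a M) X) => hMX.
  by apply: IH => // t tM; apply: hs; apply: leqW.
exists M; have := hs M (ltnSn M); rewrite !ler_norml => /andP[h1 h2].
apply/andP; split; lra.
Qed.

Definition key N (u v : 'I_N) : nat := (minn u v * N + maxn u v)%N.
Definition Gt N (B T : rel 'I_N) (t : nat) : rel 'I_N :=
  fun u v => if (key u v < t)%N then T u v else B u v.

Lemma key_sym N (u v : 'I_N) : key u v = key v u.
Proof. by rewrite /key minnC maxnC. Qed.

Lemma key_inj N (u v u' v' : 'I_N) : key u v = key u' v' ->
  ((u == u') && (v == v')) || ((u == v') && (v == u')).
Proof.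
rewrite /key => e.
have hN : (0 < N)%N by case: N u {v u' v' e} => [[]|].
have mx : forall x y : 'I_N, (maxn x y < N)%N by move=> x y; rewrite gtn_max !ltn_ord.
have m1 : minn u v = minn u' v'.
  have := congr1 (fun x => x %/ N)%N e; rewrite /= !divnMDl // !divn_small ?addn0 //.
have m2 : maxn u v = maxn u' v'.
  have := congr1 (fun x => x %% N)%N e; rewrite /= !modnMDl !modn_small //.
rewrite -!val_eqE /=; lia.
Qed.

Lemma Gt_tour N (B T : rel 'I_N) t : is_tournament B -> is_tournament T ->
  is_tournament (Gt B T t).
Proof.
move=> [B1 B2] [T1 T2]; split => [i|i j ij]; rewrite /Gt.
  by case: ifP.
by rewrite key_sym; case: ifP => _; [apply: T2 | apply: B2].
Qed.

Lemma Gt0 N (B T : rel 'I_N) : Gt B T 0 = B.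
Proof. by apply/funext => u; apply/funext => v; rewrite /Gt ltn0. Qed.

Lemma GtM N (B T : rel 'I_N) : Gt B T (N * N) = T.
Proof.
apply/funext => u; apply/funext => v; rewrite /Gt /key ifT //.
have := ltn_ord u; have := ltn_ord v; move: (val u) (val v) => a b ha hb. nia.
Qed.

Lemma Gt_step N (H : rel 'I_5) (B T : rel 'I_N) t : is_tournament B -> is_tournament T ->
  (cnt H (Gt B T t.+1) <= cnt H (Gt B T t) + 'C(N, 3))%N /\
  (cnt H (Gt B T t) <= cnt H (Gt B T t.+1) + 'C(N, 3))%N.
Proof.
move=> [B1 B2] [T1 T2].
have dg : forall t' x, Gt B T t' x x = false by move=> t' x; rewrite /Gt; case: ifP => _; apply/negbTE.
have kt : forall x y, Gt B T t.+1 x y != Gt B T t x y -> key x y = t.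
  move=> x y; rewrite /Gt; case: ltngtP => h1; case: ltngtP => h2 //;
  rewrite ?eqxx //; lia.
split; apply: cnt_flip => [x|x y x' y' h h']; rewrite ?dg //; apply: key_inj;
  rewrite (kt x y) ?(kt x' y') // 1?eq_sym //.
Qed.

Definition Tq n : rel 'I_n := fun u v => (u < v)%N.

Lemma Tq_tour n : is_tournament (@Tq n).
Proof.
split => [i|i j ij]; rewrite /Tq ?ltnn //.
by move: ij; rewrite -val_eqE /= -leqNgt; lia.
Qed.

Definition Bq s : rel 'I_(7 * s) := fun u v =>
  if (u %/ s == v %/ s)%N then (u < v)%N else qr (u %/ s) (v %/ s).

Lemma part_lt s (u : 'I_(7 * s)) : (u %/ s < 7)%N.
Proof.
have s0 : (0 < s)%N by case: s u => [[]|].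
by rewrite ltn_divLR // mulnC ltn_ord.
Qed.

Lemma Bq_tour s : is_tournament (@Bq s).
Proof.
split => [i|i j ij]; rewrite /Bq ?eqxx ?ltnn //.
rewrite eq_sym; case: eqP => e.
  by move: ij; rewrite -val_eqE /= -leqNgt; lia.
have := check_all check_qr (part_lt i) => /allP /(_ (j %/ s)%N).
rewrite mem_iota part_lt => /(_ isT) /orP[/eqP e'|/eqP //]; by case: e.
Qed.

Lemma Bq_low s (u v : 'I_(7 * s)) : (u < 3 * s)%N -> (v < 3 * s)%N -> Bq u v = (u < v)%N.
Proof.
move=> hu hv; have s0 : (0 < s)%N by case: s u v hu hv => [[]|].
rewrite /Bq; case: eqP => // e.
have pu : (u %/ s < 3)%N by rewrite ltn_divLR // mulnC.
have pv : (v %/ s < 3)%N by rewrite ltn_divLR // mulnC.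
have -> : qr (u %/ s) (v %/ s) = (u %/ s < v %/ s)%N.
  move: e pu pv; move: (u %/ s)%N (v %/ s)%N => a b.
  by case: a => [|[|[|a]]] //; case: b => [|[|[|b]]].
case: (ltngtP u v) => h.
- have := leq_div2r s (ltnW h); rewrite leq_eqVlt => /orP[/eqP //|//].
- apply/negbTE; rewrite -leqNgt; exact: leq_div2r (ltnW h).
- by move: e; rewrite h.
Qed.

Lemma imsetTc k n (f : 'I_k -> 'I_n) :
  [set f x | x in [set: 'I_k]%classic] = [set f x | x in [set: 'I_k]].
Proof.
apply/setP => y; apply/imsetP/imsetP => -[x _ ->]; exists x => //; rewrite inE //.
Qed.

Lemma vtx_proof s p (j : 'I_s) : (p %% 7 * s + j < 7 * s)%N.
Proof.
have := ltn_ord j; have : (p %% 7 < 7)%N by rewrite ltn_pmod.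
move: (p %% 7)%N (val j) => a b ha hb; nia.
Qed.

Definition vtx s (q : 'I_21) (x : {ffun 'I_5 -> 'I_s}) (i : 'I_5) : 'I_(7 * s) :=
  Ordinal (vtx_proof (mlt (q %/ 7) * base i + q %% 7) (x i)).

Lemma vtx_div s q x i : (0 < s)%N ->
  (@vtx s q x i %/ s = phi q i)%N /\ (@vtx s q x i %% s = x i)%N.
Proof.
move=> s0; rewrite /vtx /=; have hx := ltn_ord (x i).
split; first by rewrite divnMDl // (divn_small hx) addn0.
by rewrite modnMDl modn_small.
Qed.

Lemma phi_chk (q : 'I_21) (i j : 'I_5) :
  (h5 i j = qr (phi q i) (phi q j)) /\ ((phi q i == phi q j) = (i == j)).
Proof.
have := check_all check_phi (ltn_ord q) => /check_all /(_ _ (ltn_ord i)) /check_all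
  /(_ _ (ltn_ord j)) /andP[/eqP e1 /eqP e2].
by split => //; rewrite e2.
Qed.

Lemma h5_irr (i : 'I_5) : h5 i i = false.
Proof.
have := check_all check_h5 (ltn_ord i) => /check_all /(_ _ (ltn_ord i)) /andP[/negbTE -> _] //.
Qed.

Lemma Bq_vtx s q x i j : (0 < s)%N -> Bq (@vtx s q x i) (vtx q x j) = H5 i j.
Proof.
move=> s0; have [di _] := vtx_div q x i s0; have [dj _] := vtx_div q x j s0.
have [e1 e2] := phi_chk q i j.
rewrite /Bq di dj H5E e2; case: (i =P j) => [<-|ne].
  by rewrite ltnn h5_irr.
by rewrite e1.
Qed.

Lemma cnt_Bq s : (0 < s)%N -> (21 * s ^ 5 <= cnt H5 (@Bq s))%N.
Proof.
move=> s0.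
pose g := fun p : 'I_21 * {ffun 'I_5 -> 'I_s} => [ffun i => vtx p.1 p.2 i] @: [set: 'I_5].
have ginj : injective g.
  move=> [q x] [q' x'] /= e.
  have hx : forall i : 'I_5, exists j : 'I_5, (phi q i = phi q' j)%N /\ x i = x' j.
    move=> i; have : vtx q x i \in g (q', x').
      by rewrite -e; apply/imsetP; exists i; rewrite ?inE ?ffunE.
    case/imsetP => j _; rewrite ffunE => ev; exists j.
    have [d1 m1] := vtx_div q x i s0; have [d2 m2] := vtx_div q' x' j s0.
    by split; [rewrite -d1 -d2 ev | apply: val_inj; rewrite /= -m1 -m2 ev].
  have qq : q = q'.
    apply: val_inj; apply/eqP.
    have := check_all check_inj (ltn_ord q) => /check_all /(_ _ (ltn_ord q')) /implyP; apply.
    apply/allP => i; rewrite mem_iota add0n => /andP[_ hi].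
    have [j [pj _]] := hx (Ordinal hi); apply/seq.hasP; exists (val j); first by rewrite mem_iota add0n ltn_ord.
    by rewrite /= pj.
  subst q'; congr (_, _); apply/ffunP => i.
  have [j [pj xj]] := hx i.
  have ij : i = j by apply/eqP; have [_ <-] := phi_chk q i j; rewrite pj.
  by rewrite xj ij.
have -> : (21 * s ^ 5 = #|g @: [set: 'I_21 * {ffun 'I_5 -> 'I_s}]|)%N.
  by rewrite card_imset // cardsT card_prod card_ffun !card_ord.
apply: subset_leq_card; apply/fintype.subsetP => Y /imsetP[[q x] _ ->]; rewrite inE.
have finj : injective [ffun i => vtx q x i].
  move=> i j; rewrite !ffunE => e; apply/eqP.
  have [_ <-] := phi_chk q i j.
  have [d1 _] := vtx_div q x i s0; have [d2 _] := vtx_div q x j s0.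
  by rewrite -d1 -d2 e.
rewrite /g card_imset // cardsT card_ord eqxx /=.
apply/existsP; exists [ffun i => vtx q x i]; rewrite imsetTc eqxx andbT.
apply/andP; split; first by apply/injectiveP.
by apply/forallP => i; apply/forallP => j; rewrite !ffunE Bq_vtx.
Qed.

Lemma cnt_Tq n : cnt H5 (@Tq n) = 0%N.
Proof.
apply/eqP; rewrite cards_eq0; apply/eqP/setP => S; rewrite !inE.
apply/negbTE; apply/negP => /andP[_ /existsP[f /andP[_ /forallP hf]]].
have h := fun i j => eqP (forallP (hf i) j).
have a1 := h (@Ordinal 5 0 isT) (@Ordinal 5 3 isT).
have a2 := h (@Ordinal 5 3 isT) (@Ordinal 5 1 isT).
have a3 := h (@Ordinal 5 1 isT) (@Ordinal 5 0 isT).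
move: a1 a2 a3; rewrite /Tq /H5 /=; lia.
Qed.

Definition T8 : rel 'I_8 := @Tq 8.

Lemma trans_copy N (G : rel 'I_N) (S : {set 'I_N}) : #|S| = 8%N ->
  (forall u v, u \in S -> v \in S -> G u v = (u < v)%N) -> induces_copy T8 G S.
Proof.
move=> c8 hG.
have [x0 _] : exists x0, x0 \in S by apply/card_gt0P; rewrite c8.
set e := enum S.
have se : size e = 8%N by rewrite /e -cardE.
have tr : transitive (fun x y : 'I_N => (x < y)%N) by move=> a b c; apply: ltn_trans.
have so : sorted (fun x y : 'I_N => (x < y)%N) e.
  have h : sorted (relpre val ltn) (Finite.enum 'I_N).
    by rewrite -enumT -sorted_map val_enum_ord iota_ltn_sorted.
  by rewrite /e /enum_mem; exact: (sorted_filter tr _ h).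
pose f := [ffun i : 'I_8 => nth x0 e i].
have mono : forall i j : 'I_8, (i < j)%N -> (f i < f j)%N.
  by move=> i j ij; rewrite !ffunE; apply: (sorted_ltn_nth tr x0 so) => //; rewrite inE se.
have inS : forall i, f i \in S.
  move=> i; rewrite ffunE; have : nth x0 e i \in e by apply: mem_nth; rewrite se.
  by rewrite mem_enum.
have finj : injective f.
  move=> i j e'; case: (ltngtP i j) => h; last exact: val_inj.
    by have := mono _ _ h; rewrite e' ltnn.
  by have := mono _ _ h; rewrite e' ltnn.
have img : f @: [set: 'I_8] = S.
  apply/eqP; rewrite eqEcard card_imset // cardsT card_ord c8 leqnn andbT.
  by apply/fintype.subsetP => y /imsetP[i _ ->]; exact: inS.
apply/existsP; exists f; rewrite imsetTc img eqxx andbT; apply/andP; split; first by apply/injectiveP.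
apply/forallP => i; apply/forallP => j; rewrite hG ?inS // /T8 /Tq.
case: (ltngtP i j) => h.
- by rewrite (mono _ _ h).
- by move: (mono _ _ h) => h'; rewrite ltnNge ltnW.
- have -> : i = j by apply: val_inj.
  by rewrite !ltnn.
Qed.

Lemma cnt_T8 N M (G : rel 'I_N) (hMN : (M <= N)%N) :
  (forall u v : 'I_N, (u < M)%N -> (v < M)%N -> G u v = (u < v)%N) ->
  ('C(M, 8) <= cnt T8 G)%N.
Proof.
move=> hG.
have wi : injective (widen_ord hMN) by move=> a b e; apply: val_inj; exact: (congr1 val e).
have -> : 'C(M, 8) = #|[set A : {set 'I_M} | #|A| == 8]| by rewrite card_draws card_ord.
rewrite -(card_imset _ (imset_inj wi)).
apply: subset_leq_card; apply/fintype.subsetP => Y /imsetP[A]; rewrite inE => /eqP cA ->.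
rewrite inE card_imset // cA eqxx /=.
apply: trans_copy; first by rewrite card_imset.
by move=> u v /imsetP[a _ ->] /imsetP[b _ ->]; apply: hG; rewrite /= ltn_ord.
Qed.

Lemma ffact_le_exp n m : (n ^_ m <= n ^ m)%N.
Proof.
elim: m => [|m IH]; first by rewrite ffactn0.
by rewrite ffactnSr expnSr leq_mul // leq_subr.
Qed.

Lemma exp_le_ffact n m : ((n - m) ^ m <= n ^_ m)%N.
Proof.
elim: m => [|m IH]; first by rewrite ffactn0.
rewrite ffactnSr expnSr leq_mul //; last by rewrite leq_sub2l.
apply: leq_trans IH; case: m => [|m]; first by rewrite !expn0.
by rewrite leq_exp2r // leq_sub2l.
Qed.

Lemma ineq_T8 s : (40 <= s)%N -> (2 ^ 8 * 'C(7 * s, 8) <= 5 ^ 8 * 'C(3 * s, 8))%N.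
Proof.
move=> s40; set a := (2 ^ 8)%N; set b := (5 ^ 8)%N.
rewrite -(@leq_pmul2r (8`!)) ?fact_gt0 // -[(a * _ * _)%N]mulnA -[(b * _ * _)%N]mulnA !bin_ffact.
apply: (@leq_trans (a * (7 * s) ^ 8)); first exact: (leq_mul (leqnn _) (ffact_le_exp _ _)).
apply: (@leq_trans (b * (3 * s - 8) ^ 8)); last exact: (leq_mul (leqnn _) (exp_le_ffact _ _)).
rewrite /a /b -!expnMn leq_exp2r //; lia.
Qed.

Lemma ineq_H5 s : (15 * 'C(7 * s, 5) <= 2688 * s ^ 5)%N.
Proof.
set a := 15%N; set b := 2688%N.
rewrite -(@leq_pmul2r (5`!)) ?fact_gt0 // -[(a * _ * _)%N]mulnA bin_ffact.
apply: (@leq_trans (a * (7 * s) ^ 5)); first exact: (leq_mul (leqnn _) (ffact_le_exp _ _)).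
rewrite expnMn !factS fact0 /a /b; move: (s ^ 5)%N => x; lia.
Qed.

Lemma ineq_err N : (8 <= N)%N -> (N * 'C(N, 3) <= 20 * 'C(N, 5))%N.
Proof.
move=> N8.
have e5 := mul_bin_left N 4; have e4 := mul_bin_left N 3.
have -> : (20 * 'C(N, 5) = (N - 4) * (N - 3) * 'C(N, 3))%N.
  rewrite -mulnA -e4 mulnCA -e5; lia.
rewrite leq_mul2r; apply/orP; right; nia.
Qed.

Lemma Aut_gt0 m (F : rel 'I_m) : (0 < #|Defs.Aut F|)%N.
Proof.
apply/card_gt0P; exists 1%g; rewrite inE; apply/forallP => i; apply/forallP => j.
by rewrite !perm1.
Qed.

Lemma rand_le (R : realType) m (F : rel 'I_m) :
  0 <= rand_dens R F /\ rand_dens R F <= (m`!)%:R / ((2 ^ 'C(m, 2))%:R).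
Proof.
rewrite /rand_dens -natrX; have A0 := Aut_gt0 F.
have P0 : (0 : R) <= ((2 ^ 'C(m, 2))%:R)^-1 by rewrite invr_ge0 ler0n.
split; first by rewrite mulr_ge0 // divr_ge0 // ler0n.
rewrite ler_wpM2r // ler_pdivrMr ?ltr0n //; apply: ler_peMr; rewrite ?ler0n // ler1n //.
Qed.

Definition c0 (R : realType) : R := (2 ^ 8)%:R / (5 ^ 8)%:R.

Lemma exists_G (R : realType) s : (40 <= s)%N ->
  exists G : rel 'I_(7 * s), is_tournament G /\
    `|dens R H5 G - rand_dens R H5| <= 20%:R / (7 * s)%:R /\ c0 R <= dens R T8 G.
Proof.
move=> s40; set N := (7 * s)%N.
have s0 : (0 < s)%N by clear -s40; lia.
have hB := @Bq_tour s; have hT := @Tq_tour N.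
set r := rand_dens R H5.
have [r0 r1] : 0 <= r /\ r <= 15%:R / 128%:R.
  have [h1 h2] := rand_le R H5; split => //; apply: le_trans h2 _.
  rewrite (_ : 'C(5, 2) = 10%N) // ler_pdivrMr ?ltr0n ?expn_gt0 // mulrAC ler_pdivlMr ?ltr0n //.
  by rewrite -!natrM ler_nat !factS fact0.
have N5 : (5 <= N)%N by lia.
have C5p : (0 : R) < ('C(N, 5))%:R by rewrite ltr0n bin_gt0.
set C5 := (('C(N, 5))%:R : R).
set X := r * C5.
pose a t := ((cnt H5 (Gt (@Bq s) (@Tq N) t))%:R : R).
have [t ht] : exists t, `|a t - X| <= ('C(N, 3))%:R.
  apply: (@ivt_disc R a X _ (N * N)).
  - by rewrite ler0n.
  - rewrite /a Gt0; apply: (@le_trans _ _ ((21 * s ^ 5)%N)%:R); last by rewrite ler_nat cnt_Bq.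
    apply: (@le_trans _ _ (15%:R / 128%:R * C5)); first by rewrite ler_wpM2r // ltW.
    rewrite mulrAC ler_pdivrMr ?ltr0n // -!natrM ler_nat /C5.
    have := ineq_H5 s; rewrite /N; lia.
  - by rewrite /a GtM cnt_Tq /X mulr_ge0 // ltW.
  - move=> t' _; have [h1 h2] := Gt_step H5 t' hB hT.
    rewrite ler_norml; move: h1 h2; rewrite -!(ler_nat R) !natrD /a => h1 h2.
    apply/andP; split; lra.
exists (Gt (@Bq s) (@Tq N) t); split; first exact: Gt_tour.
split.
- rewrite dens_cnt // -/C5.
  have -> : r = X / C5 by rewrite /X mulfK // gt_eqF.
  rewrite -mulrBl normrM [`|C5^-1|]ger0_norm; last by rewrite invr_ge0 ltW.
  apply: (@le_trans _ _ (('C(N, 3))%:R / C5)); first by rewrite ler_wpM2r // invr_ge0 ltW.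
  rewrite ler_pdivrMr // mulrAC ler_pdivlMr ?ltr0n; last by lia.
  by rewrite -!natrM ler_nat mulnC ineq_err //; lia.
- rewrite dens_cnt; last by lia.
  have hc := @cnt_T8 N (3 * s) (Gt (@Bq s) (@Tq N) t) (leq_mul (isT : (3 <= 7)%N) (leqnn s)).
  have {}hc : ('C(3 * s, 8) <= cnt T8 (Gt (@Bq s) (@Tq N) t))%N.
    apply: hc => u v hu hv; rewrite /Gt; case: ifP => _ //; exact: Bq_low.
  have C8p : (0 : R) < ('C(N, 8))%:R by rewrite ltr0n bin_gt0; lia.
  rewrite /c0 ler_pdivlMr // mulrAC ler_pdivrMr ?ltr0n ?expn_gt0 // -!natrM ler_nat.
  apply: leq_trans (ineq_T8 s40) _; rewrite mulnC leq_mul2r hc orbT //.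
Qed.

Lemma is_tour_H5 : is_tournament H5.
Proof.
split => [i|i j ij]; rewrite !H5E ?h5_irr //.
have := check_all check_h5 (ltn_ord i) => /check_all /(_ _ (ltn_ord j)) /andP[_ /orP[/eqP e|/eqP //]].
by case/eqP: ij; apply: val_inj.
Qed.

Lemma c0_gt (R : realType) : rand_dens R T8 < c0 R.
Proof.
have [_ h] := rand_le R T8; apply: le_lt_trans h _.
rewrite /c0 (_ : 'C(8, 2) = 28%N) // ltr_pdivrMr ?ltr0n ?expn_gt0 // mulrAC ltr_pdivlMr ?ltr0n ?expn_gt0 //.
rewrite -!natrM ltr_nat !factS fact0; lia.
Qed.

Local Open Scope classical_set_scope.
Theorem mainTheorem6 (R : realType) : is_tournament H5 /\ ~ qr_forcing R H5.
Proof.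
split; first exact: is_tour_H5.
move=> hf.
have hc : forall n : nat, exists y : {N : nat & rel 'I_N},
   [/\ (n <= projT1 y)%N, is_tournament (projT2 y),
   `|dens R H5 (projT2 y) - rand_dens R H5| <= 20%:R / (projT1 y)%:R &
   c0 R <= dens R T8 (projT2 y)].
  move=> n; have [G [h1 [h2 h3]]] := exists_G R (leq_addl n 40).
  by exists (existT _ (7 * (n + 40))%N G); split => //=; lia.
have [f hf'] := choice hc.
have ts : is_tseq f.
  split; first by move=> n; have [] := hf' n.
  move=> M; exists M => n hn; have [h _ _ _] := hf' n; exact: leq_trans hn h.
have conv : (fun n => dens R H5 (projT2 (f n))) @ \oo --> rand_dens R H5.
  apply/cvgrPdist_le => e e0.
  have [N0 hN0] : exists N0 : nat, 20%:R / e < N0%:R by eexists; apply: truncnS_gt.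
  exists N0.+1 => // n /= hn.
  have [hn1 _ h _] := hf' n; rewrite distrC; apply: le_trans h _.
  have p0 : (0 : R) < (projT1 (f n))%:R by rewrite ltr0n; apply: leq_trans hn1; apply: leq_trans hn.
  rewrite ler_pdivrMr // -ler_pdivrMl // mulrC; apply: (le_trans (ltW hN0)).
  by rewrite ler_nat; apply: leq_trans hn1; apply: leq_trans (leqnSn _) hn.
have := hf f ts conv 8 T8 (@Tq_tour 8) => /cvgrPdist_lt /(_ (c0 R - rand_dens R T8)).
rewrite subr_gt0 c0_gt => /(_ isT) [N0 _ HN].
have := HN N0 (leqnn _); have [_ _ _ h] := hf' N0.
rewrite ltr_norml => /andP[h2 _]; lra.
Qed.
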